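(* Any linear automorphism ${\bf A}$ of $L_{1,3}$ is a scalar multiple of a signed permutation induced by a vertex relabeling, i.e., ${\bf A}=c\,{\bf S}{\bf P}$ with $c\in\mathbb C\setminus\{0\}$, ${\bf S}$ a $3\times3$ diagonal matrix with entries $\pm1$, and ${\bf P}$ a permutation matrix sending $e_{\{i,j\}}$ to $e_{\{\sigma(i),\sigma(j)\}}$ for some permutation $\sigma$ of $\{1,2,3\}$.
   Context: Coordinates of $\mathbb C^3$ are indexed by the edges $\{1,2\},\{1,3\},\{2,3\}$. For complex numbers ${\bf p}_1,{\bf p}_2,{\bf p}_3$, $m({\bf p})$ has coordinates $m_{ij}=({\bf p}_i-{\bf p}_j)^2$; $M_{1,3}$ is the image of $m$, and $L_{1,3}=\{l\in\mathbb C^3:(l_{12}^2,l_{13}^2,l_{23}^2)\in M_{1,3}\}$. A linear automorphism of $L_{1,3}$ is a non-singular $3\times 3$ complex matrix mapping $L_{1,3}$ bijectively onto itself. *)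

(* Defs.v *)
From mathcomp Require Import all_boot all_order all_algebra all_fingroup.
From mathcomp Require Import complex Rstruct.
From Stdlib Require Import Reals.
Set Implicit Arguments. Unset Strict Implicit. Unset Printing Implicit Defensive.
Import Order.TTheory GRing.Theory Num.Theory.
Local Open Scope ring_scope.

Definition C := Rdefinitions.R[i].

(* Vertices {1,2,3} are 'I_3 = {0,1,2}; coordinates of C^3 ('cV[C]_3) are
   indexed by edges: index 0 = {1,2}, index 1 = {1,3}, index 2 = {2,3}. *)
Definition edge_verts (e : 'I_3) : 'I_3 * 'I_3 :=
  match val e with
  | 0%N => (inord 0, inord 1)
  | 1%N => (inord 0, inord 2)
  | _ => (inord 1, inord 2)
  end.

Definition edge_set (e : 'I_3) : {set 'I_3} :=
  [set (edge_verts e).1; (edge_verts e).2].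

Definition mmap (p : 'I_3 -> C) : 'cV[C]_3 :=
  \col_e ((p (edge_verts e).1 - p (edge_verts e).2) ^+ 2).

Definition M13 (x : 'cV[C]_3) : Prop := exists p : 'I_3 -> C, x = mmap p.

Definition L13 (l : 'cV[C]_3) : Prop := M13 (\col_e (l e 0 ^+ 2)).

Definition lin_aut_L13 (A : 'M[C]_3) : Prop :=
  A \in unitmx /\
  (forall l, L13 l -> L13 (A *m l)) /\
  (forall l', L13 l' -> exists l, L13 l /\ A *m l = l').

Definition edge_perm_mx (s : 'S_3) : 'M[C]_3 :=
  \matrix_(e, f) ((edge_set e == [set s x | x in edge_set f]) : bool)%:R.

Definition sign_diag (S : 'M[C]_3) : Prop :=
  (forall i j : 'I_3, i != j -> S i j = 0) /\
  (forall i : 'I_3, S i i = 1 \/ S i i = -1).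

(* Main.v *)
Require Import Defs.
From mathcomp Require Import all_boot all_order all_algebra all_fingroup.
From mathcomp Require Import complex Rstruct.
From mathcomp Require Import ring.
Import GRing.Theory Num.Theory.
Local Open Scope ring_scope.



Definition o0 : 'I_3 := @Ordinal 3 0 isT.
Definition o1 : 'I_3 := @Ordinal 3 1 isT.
Definition o2 : 'I_3 := @Ordinal 3 2 isT.
Definition q0 : 'I_4 := @Ordinal 4 0 isT.
Definition q1 : 'I_4 := @Ordinal 4 1 isT.
Definition q2 : 'I_4 := @Ordinal 4 2 isT.
Definition q3 : 'I_4 := @Ordinal 4 3 isT.

Lemma ord3_ind (P : 'I_3 -> Prop) : P o0 -> P o1 -> P o2 -> forall i, P i.
Proof.
move=> H0 H1 H2 [[|[|[|i]]] Hi] //.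
- by have -> : Ordinal Hi = o0 by apply: val_inj.
- by have -> : Ordinal Hi = o1 by apply: val_inj.
- by have -> : Ordinal Hi = o2 by apply: val_inj.
Qed.

Lemma ord4_ind (P : 'I_4 -> Prop) : P q0 -> P q1 -> P q2 -> P q3 -> forall i, P i.
Proof.
move=> H0 H1 H2 H3 [[|[|[|[|i]]]] Hi] //.
- by have -> : Ordinal Hi = q0 by apply: val_inj.
- by have -> : Ordinal Hi = q1 by apply: val_inj.
- by have -> : Ordinal Hi = q2 by apply: val_inj.
- by have -> : Ordinal Hi = q3 by apply: val_inj.
Qed.

Lemma sum3 (F : 'I_3 -> C) : \sum_(i < 3) F i = F o0 + F o1 + F o2.
Proof.
rewrite !big_ord_recr big_ord0 /= add0r; congr (F _ + F _ + F _); exact: val_inj.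
Qed.

Lemma sum4 (F : 'I_4 -> C) : \sum_(i < 4) F i = F q0 + F q1 + F q2 + F q3.
Proof.
rewrite !big_ord_recr big_ord0 /= add0r; congr (F _ + F _ + F _ + F _); exact: val_inj.
Qed.

(* normals: n0=(-1,-1,-1), n1=(1,1,-1), n2=(1,-1,1), n3=(-1,1,1) *)
Definition nC (k : 'I_4) (i : 'I_3) : C :=
  match val k, val i with
  | 0%N, _ => -1
  | 1%N, 2%N => -1 | 1%N, _ => 1
  | 2%N, 1%N => -1 | 2%N, _ => 1
  | _, 0%N => -1 | _, _ => 1
  end.

Definition nrow (k : 'I_4) : 'rV[C]_3 := \row_i nC k i.
Definition f (k : 'I_4) (x : 'cV[C]_3) : C := (nrow k *m x) 0 0.

Lemma rvE (r : 'rV[C]_3) (x : 'cV[C]_3) :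
  (r *m x) 0 0 = r 0 o0 * x o0 0 + r 0 o1 * x o1 0 + r 0 o2 * x o2 0.
Proof. by rewrite mxE sum3. Qed.

Lemma fE k x : f k x = nC k o0 * x o0 0 + nC k o1 * x o1 0 + nC k o2 * x o2 0.
Proof. by rewrite /f rvE !mxE. Qed.

Lemma nC_pm k i : nC k i = 1 \/ nC k i = -1.
Proof.
by elim/ord4_ind: k; elim/ord3_ind: i; rewrite /nC /=; auto.
Qed.

Lemma nC_sq k i : nC k i * nC k i = 1.
Proof. by case: (nC_pm k i) => ->; rewrite ?mulr1 ?mulrNN ?mulr1. Qed.



Lemma L13_planes x : L13 x -> exists k, f k x = 0.
Proof.
case=> p H.
have Ha := congr1 (fun M : 'cV[C]_3 => M o0 0) H.
have Hb := congr1 (fun M : 'cV[C]_3 => M o1 0) H.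
have Hc := congr1 (fun M : 'cV[C]_3 => M o2 0) H.
move: Ha Hb Hc; rewrite !mxE /=.
set a := x o0 0; set b := x o1 0; set c := x o2 0.
set P0 := p _; set P1 := p _; set P2 := p _.
move=> Ha Hb Hc.
have E : f q0 x * f q1 x * f q2 x * f q3 x =
  - (2 * a^+2 * b^+2 + 2 * b^+2 * c^+2 + 2 * c^+2 * a^+2
     - a^+2 * a^+2 - b^+2 * b^+2 - c^+2 * c^+2).
  rewrite !fE /nC /= -/a -/b -/c; ring.
rewrite Ha Hb Hc in E.
have : f q0 x * f q1 x * f q2 x * f q3 x = 0 by rewrite E; ring.
move/eqP; rewrite !mulf_eq0 => /orP[/orP[/orP[]|]|] /eqP; eauto.
Qed.

Lemma L13_plane k x : f k x = 0 -> L13 x.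
Proof.
rewrite fE.
set a := x o0 0; set b := x o1 0; set c := x o2 0.
move=> E.
pose s : C := if (val k < 2)%N then 1 else -1.
pose p := fun i : 'I_3 => match nat_of_ord i with 0%N => 0 | 1%N => - a | _ => s * b end.
exists p; apply/matrixP => e j; rewrite !mxE.
elim/ord3_ind: e; rewrite /= /p !inordK //= -/a -/b -/c.
- ring.
- rewrite /s; case: (val k < 2)%N; ring.
- apply/eqP; rewrite -subr_eq0; apply/eqP; move: E; rewrite /s; clear s p.
  elim/ord4_ind: k; rewrite /nC /= => E.
  + have -> : c ^+ 2 - (- a - 1 * b) ^+ 2 = - (-1 * a + -1 * b + -1 * c) * (c - a - b) by ring.
    by rewrite E; ring.
  + have -> : c ^+ 2 - (- a - 1 * b) ^+ 2 = - (1 * a + 1 * b + -1 * c) * (c + a + b) by ring.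
    by rewrite E; ring.
  + have -> : c ^+ 2 - (- a - -1 * b) ^+ 2 = (1 * a + -1 * b + 1 * c) * (c + b - a) by ring.
    by rewrite E; ring.
  + have -> : c ^+ 2 - (- a - -1 * b) ^+ 2 = (-1 * a + 1 * b + 1 * c) * (c + a - b) by ring.
    by rewrite E; ring.
Qed.



Definition u (k : 'I_4) : 'cV[C]_3 :=
  \col_i (match nat_of_ord i with 0%N => nC k o1 | 1%N => - nC k o0 | _ => 0 end).
Definition w (k : 'I_4) : 'cV[C]_3 :=
  \col_i (match nat_of_ord i with 0%N => nC k o2 | 1%N => 0 | _ => - nC k o0 end).

Lemma kill_plane (r : 'rV[C]_3) k :
  (r *m u k) 0 0 = 0 -> (r *m w k) 0 0 = 0 -> r = (r 0 o0 * nC k o0) *: nrow k.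
Proof.
rewrite !rvE !mxE /= => E1 E2.
have h0 := nC_sq k o0.
apply/matrixP => i j; rewrite !mxE (ord1 i) {i}.
elim/ord3_ind: j.
- by rewrite -mulrA h0 mulr1.
- have e : r 0 o1 * nC k o0 = r 0 o0 * nC k o1.
    by apply/eqP; rewrite eq_sym -subr_eq0; apply/eqP; rewrite -E1; ring.
  transitivity (r 0 o1 * (nC k o0 * nC k o0)); first by rewrite h0 mulr1.
  by rewrite mulrA e; ring.
- have e : r 0 o2 * nC k o0 = r 0 o0 * nC k o2.
    by apply/eqP; rewrite eq_sym -subr_eq0; apply/eqP; rewrite -E2; ring.
  transitivity (r 0 o2 * (nC k o0 * nC k o0)); first by rewrite h0 mulr1.
  by rewrite mulrA e; ring.
Qed.

Lemma plane_step (A : 'M[C]_3) k : (forall l, L13 l -> L13 (A *m l)) ->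
  exists j, (nrow j *m A *m u k) 0 0 = 0 /\ (nrow j *m A *m w k) 0 0 = 0.
Proof.
move=> HA.
pose l (t : 'I_5) := u k + (t%:R : C) *: w k.
have Hl : forall t, exists j, f j (A *m l t) = 0.
  move=> t; apply: L13_planes; apply: HA; apply: (@L13_plane k).
  rewrite /l /f mulmxDr -scalemxAr !mxE !sum3 !mxE /=.
  ring.
have [g Hg] := fin_all_exists Hl.
have : ~~ injectiveb g.
  apply/negP => /injectiveP /leq_card; by rewrite !card_ord.
case/injectivePn => t1 [t2 Ht Hg12].
have key t j : f j (A *m l t) = (nrow j *m A *m u k) 0 0 + t%:R * (nrow j *m A *m w k) 0 0.
  by rewrite /f /l mulmxA mulmxDr -scalemxAr !mxE.
exists (g t1).
have E1 := Hg t1; have E2 := Hg t2.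
move: E1 E2; rewrite -Hg12 !key.
set X := (_ *m u k) 0 0; set Y := (_ *m w k) 0 0.
move=> E1 E2.
have HY : Y = 0.
  have : (t1%:R - t2%:R) * Y = 0 :> C by rewrite -[0](subrr 0) -{1}E1 -E2; ring.
  move/eqP; rewrite mulf_eq0 subr_eq0 eqr_nat => /orP[/eqP /val_inj H|/eqP //].
  by rewrite H eqxx in Ht.
split=> //; by rewrite -E1 HY mulr0 addr0.
Qed.



Lemma two_eq (x y : C) : 2 * (x - y) = 0 -> x = y.
Proof.
move/eqP; rewrite mulf_eq0 subr_eq0 => /orP[|/eqP //].
by rewrite (eqr_nat C 2 0).
Qed.

Lemma nC_sep k k' : k != k' -> exists i i',
  nC k i = nC k' i /\ nC k i' = - nC k' i'.
Proof.
elim/ord4_ind: k; elim/ord4_ind: k'; rewrite ?eqxx // => _;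
first [ exists o0, o1; rewrite /nC /=; split; ring
      | exists o0, o2; rewrite /nC /=; split; ring
      | exists o1, o0; rewrite /nC /=; split; ring
      | exists o1, o2; rewrite /nC /=; split; ring
      | exists o2, o0; rewrite /nC /=; split; ring
      | exists o2, o1; rewrite /nC /=; split; ring ].
Qed.

Lemma nrow_neq0 k : nrow k != 0.
Proof.
apply/negP => /eqP /matrixP /(_ 0 o0); rewrite !mxE => E.
by have := nC_sq k o0; rewrite E mul0r => /eqP; rewrite eq_sym oner_eq0.
Qed.

Lemma sum_nrow : \sum_k nrow k = 0.
Proof.
apply/matrixP => i j; rewrite summxE sum4 !mxE.
elim/ord3_ind: j; rewrite /nC /=; ring.
Qed.

Lemma step_lambda (A : 'M[C]_3) : lin_aut_L13 A ->
  exists (pi : 'I_4 -> 'I_4) (c : C),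
    injective pi /\ c != 0 /\ forall k, nrow (pi k) *m A = c *: nrow k.
Proof.
case=> Au [HA _].
have H1 : forall k, exists jl : 'I_4 * C, nrow jl.1 *m A = jl.2 *: nrow k.
  move=> k; have [j [E1 E2]] := @plane_step A k HA.
  by exists (j, (nrow j *m A) 0 o0 * nC k o0); exact: kill_plane.
have [h Hh] := fin_all_exists H1.
pose pi k := (h k).1; pose lam k := (h k).2.
have Hl : forall k, lam k != 0.
  move=> k; apply/negP => /eqP E.
  have := Hh k; rewrite -/(pi k) -/(lam k) E scale0r => E0.
  have : nrow (pi k) = 0 by rewrite -(mulmxK Au (nrow (pi k))) E0 mul0mx.
  by move/eqP; rewrite (negbTE (nrow_neq0 _)).
have Hpi : injective pi.
  move=> k k' E; apply/eqP/negPn/negP => /nC_sep [i [i' [Ei Ei']]].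
  have := Hh k; have := Hh k'; rewrite -/(pi k) -/(pi k') -/(lam k) -/(lam k') -E.
  move=> -> /matrixP M.
  have Mi := M 0 i; have Mi' := M 0 i'; rewrite !mxE in Mi Mi'.
  have e1 : lam k = lam k'.
    by rewrite -[lam k]mulr1 -(nC_sq k i) mulrA -Mi Ei -mulrA nC_sq mulr1.
  have e2 : lam k = - lam k'.
    by rewrite -[lam k]mulr1 -(nC_sq k i') mulrA -Mi' Ei' mulrN -mulrA nC_sq mulr1.
  move: (Hl k); rewrite (@two_eq (lam k) 0) ?eqxx //.
  rewrite subr0; have -> : 2 * lam k = lam k + lam k by ring.
  by rewrite {2}e2 e1 subrr.
have Hsum : \sum_k lam k *: nrow k = 0.
  rewrite -(eq_bigr _ (fun k _ => Hh k)) -mulmx_suml.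
  by rewrite -(reindex_inj Hpi (F := nrow) (P := xpredT)) sum_nrow mul0mx.
have Hs := fun i => congr1 (fun M : 'rV[C]_3 => M 0 i) Hsum.
have S0 := Hs o0; have S1 := Hs o1; have S2 := Hs o2.
rewrite /= !summxE !sum4 !mxE /nC /= in S0 S1 S2.
have Ll : forall k, lam k = lam q0.
  elim/ord4_ind => //; apply: two_eq.
  - by rewrite -[0](addr0 0) -{1}S0 -S1; ring.
  - by rewrite -[0](addr0 0) -{1}S0 -S2; ring.
  - by rewrite -[0](addr0 0) -{1}S1 -S2; ring.
exists pi, (lam q0); split=> //; split=> // k.
by rewrite -(Ll k); exact: Hh.
Qed.



Lemma inord3 (n : nat) (H : (n < 3)%N) : (inord n : 'I_3) = Ordinal H.
Proof. by apply/val_inj; rewrite /= inordK. Qed.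

Lemma edge_setE e : edge_set e = ~: [set rev_ord e].
Proof.
apply/setP => x; rewrite !inE.
elim/ord3_ind: e; rewrite /edge_set /edge_verts /= ?(@inord3 0 isT) ?(@inord3 1 isT) ?(@inord3 2 isT) ?inE;
elim/ord3_ind: x => //.
Qed.

Lemma imset_setC1 (s : 'S_3) a : s @: (~: [set a]) = ~: [set s a].
Proof.
apply/setP => x; rewrite !inE; apply/imsetP/idP.
- by case=> y; rewrite !inE => Hy ->; rewrite (inj_eq perm_inj).
- move=> Hx; exists (s^-1 x)%g; last by rewrite permKV.
  rewrite !inE; apply: contra Hx => /eqP <-; by rewrite permKV.
Qed.

Lemma edge_permE (s : 'S_3) e g :
  (edge_set e == s @: edge_set g) = (rev_ord e == s (rev_ord g)).
Proof.
by rewrite !edge_setE imset_setC1 (inj_eq (@setC_inj _)) (inj_eq (@set1_inj _)).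
Qed.



Definition pc (x y : 'I_4) : 'I_3 :=
  match nat_of_ord x, nat_of_ord y with
  | 0%N, 1%N | 1%N, 0%N | 2%N, 3%N | 3%N, 2%N => o2
  | 0%N, 2%N | 2%N, 0%N | 1%N, 3%N | 3%N, 1%N => o1
  | _, _ => o0 end.

Definition sg (x y : 'I_4) : C :=
  if (nat_of_ord x == 0%N) || (nat_of_ord y == 0%N) then -1 else 1.

Lemma pair_sum x y m : nat_of_ord x != nat_of_ord y ->
  nC x m + nC y m = 2 * sg x y * (nat_of_ord m == nat_of_ord (pc x y))%:R.
Proof.
elim/ord4_ind: x; elim/ord4_ind: y => //= _; elim/ord3_ind: m; rewrite /nC /sg /=; ring.
Qed.

Lemma pc_sym x y : pc x y = pc y x.
Proof. by elim/ord4_ind: x; elim/ord4_ind: y. Qed.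

Lemma pc_diff a b d : nat_of_ord a != nat_of_ord b -> nat_of_ord a != nat_of_ord d ->
  nat_of_ord b != nat_of_ord d -> nat_of_ord (pc a b) != nat_of_ord (pc a d).
Proof. by elim/ord4_ind: a; elim/ord4_ind: b; elim/ord4_ind: d. Qed.

Lemma sg_pm x y : sg x y = 1 \/ sg x y = -1.
Proof. rewrite /sg; case: ifP; auto. Qed.

Lemma pc_diff3 a b d : nat_of_ord a != nat_of_ord b -> nat_of_ord a != nat_of_ord d ->
  nat_of_ord b != nat_of_ord d ->
  [/\ nat_of_ord (pc a b) != nat_of_ord (pc a d),
      nat_of_ord (pc a b) != nat_of_ord (pc b d) &
      nat_of_ord (pc a d) != nat_of_ord (pc b d)].
Proof. by elim/ord4_ind: a; elim/ord4_ind: b; elim/ord4_ind: d. Qed.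



Theorem theorem5p27 (A : 'M[C]_3) :
  lin_aut_L13 A ->
  exists (c : C) (S : 'M[C]_3) (s : 'S_3),
    c != 0 /\ sign_diag S /\ A = c *: (S *m edge_perm_mx s).
Proof.
move=> HA; have [pi [c [Hpi [Hc H]]]] := @step_lambda A HA.
pose pp := perm Hpi; pose rho := (pp^-1)%g.
have Hr : forall x, nrow x *m A = c *: nrow (rho x).
  move=> x; rewrite -H; have e : pi (rho x) = x.
    by rewrite -[pi _](permE Hpi) permKV.
  by rewrite e.
have Hd : forall a b : 'I_4, a != b -> nat_of_ord (rho a) != nat_of_ord (rho b).
  by move=> a b; rewrite val_eqE (inj_eq perm_inj).
pose px (i : 'I_3) := match nat_of_ord i with 0%N => q1 | 1%N => q1 | _ => q2 end.
pose py (i : 'I_3) := match nat_of_ord i with 0%N => q2 | 1%N => q3 | _ => q3 end.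
have H2 : forall i m, 2 * A i m = (nrow (px i) *m A) 0 m + (nrow (py i) *m A) 0 m.
  move=> i m; rewrite !mxE !sum3 !mxE; elim/ord3_ind: i; rewrite /px /py /nC /=; ring.
pose q i := pc (rho (px i)) (rho (py i)); pose s i := sg (rho (px i)) (rho (py i)).
have n2 : (2 : C) != 0 by rewrite (eqr_nat C 2 0).
have Hrow : forall i m, A i m = c * s i * (nat_of_ord m == nat_of_ord (q i))%:R.
  move=> i m; have := H2 i m; rewrite !Hr !mxE -mulrDr pair_sum; last first.
    by apply: Hd; elim/ord3_ind: i.
  move=> E; apply: (mulfI n2); rewrite E /s /q; ring.
have qinj : injective q.
  have [D1 D2 D3] := @pc_diff3 _ _ _ (Hd q1 q2 isT) (Hd q1 q3 isT) (Hd q2 q3 isT).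
  move=> i i'; elim/ord3_ind: i; elim/ord3_ind: i' => //; rewrite /q /px /py /= => E;
  by rewrite E eqxx in D1 D2 D3.
pose qp := perm qinj.
have sinj : injective (fun x : 'I_3 => rev_ord ((qp^-1)%g (rev_ord x))).
  by move=> x y /rev_ord_inj /perm_inj /rev_ord_inj.
pose sig := perm sinj.
exists c, (diag_mx (\row_i s i)), sig; split=> //; split.
  split.
    by move=> i j nij; rewrite mxE (negbTE nij) mulr0n.
  by move=> i; rewrite mxE eqxx mulr1n mxE; exact: sg_pm.
apply/matrixP => i m; rewrite mxE mul_diag_mx !mxE edge_permE Hrow.
have -> : (rev_ord i == sig (rev_ord m)) = (nat_of_ord m == nat_of_ord (q i)).
  rewrite permE rev_ordK (inj_eq rev_ord_inj) val_eqE eq_sym.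
  apply/eqP/eqP => [E | E]; first by rewrite -[q _](permE qinj) -E permKV.
  by rewrite E -[q _](permE qinj) permK.
by rewrite mulrA.
Qed.
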